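(* Consider two spacecraft $i=1,2$ together with an assigned third spacecraft $3$, with the notation of the context (edge $(1,2)$, $\rho(1,2)=\rho(2,1)=3$). Let $k^\alpha_{12},k^\beta_{12}>0$ with $k^\alpha_{12}\neq k^\beta_{12}$, and set $k^\alpha_{21}=k^\alpha_{12}$ and $k^\beta_{21}=k^\beta_{12}$. Define $$\Psi_{12}=k^\alpha_{12}\Psi^\alpha_{12}+k^\beta_{12}\Psi^\beta_{12},\quad e_{12}=k^\alpha_{12}e^\alpha_{12}+k^\beta_{12}e^\beta_{12},\quad e_{21}=k^\alpha_{21}e^\alpha_{21}+k^\beta_{21}e^\beta_{21}.$$ Then, along any trajectory of the kinematics $\dot R_i=R_i\hat\Omega_i$ ($i=1,2$): (i) $e_{12}=-Q^d_{21}e_{21}$, and hence $\|e_{12}\|=\|e_{21}\|$. (ii) $\frac{d}{dt}\Psi_{12}=e_{12}\cdot e_{\Omega_1}+e_{21}\cdot e_{\Omega_2}$. (iii) $\|\dot e_{12}\|\le (k^\alpha_{12}+k^\beta_{12})(\|e_{\Omega_1}\|+\|e_{\Omega_2}\|)+B^d\|e_{12}\|$ and $\|\dot e_{21}\|\le (k^\alpha_{12}+k^\beta_{12})(\|e_{\Omega_1}\|+\|e_{\Omega_2}\|)+B^d\|e_{21}\|$. (iv) If $\Psi_{12}\le\psi<2\min\{k^\alpha_{12},k^\beta_{12}\}$ for a constant $\psi$, then $$\underline\psi_{12}\|e_{12}\|^2\le\Psi_{12}\le\overline\psi_{12}\|e_{12}\|^2,$$ where $$\underline\psi_{12}=\frac{\min\{k^\alpha_{12},k^\beta_{12}\}}{2\max\{(k^\alpha_{12})^2,(k^\beta_{12})^2,(k^\alpha_{12}-k^\beta_{12})^2\}+2(k^\alpha_{12}+k^\beta_{12})^2},$$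 $$\overline\psi_{12}=\frac{\min\{k^\alpha_{12},k^\beta_{12}\}\,(k^\alpha_{12}+k^\beta_{12})}{\min\{(k^\alpha_{12})^2,(k^\beta_{12})^2\}\,\bigl(2\min\{k^\alpha_{12},k^\beta_{12}\}-\psi\bigr)}.$$
   Context: Notation: $\mathsf{SO}(3)=\{R\in\mathbb{R}^{3\times3}: R^TR=I,\ \det R=1\}$. The hat map $\hat{\cdot}:\mathbb{R}^3\to\mathfrak{so}(3)$ is defined by $\hat x y=x\times y$. $\|\cdot\|$ is the Euclidean norm, and $x\cdot y=x^Ty$. Spacecraft $i$ is a rigid body with attitude $R_i(t)\in\mathsf{SO}(3)$, which maps body-frame to inertial-frame coordinates. Its body angular velocity is $\Omega_i(t)\in\mathbb{R}^3$, and $\dot R_i=R_i\hat\Omega_i$. The spacecraft positions $p_i\in\mathbb{R}^3$ are fixed in the inertial frame. Set $s_{ij}=(p_j-p_i)/\|p_j-p_i\|$; these are constant unit vectors with $s_{ji}=-s_{ij}$. The line-of-sight measurement of spacecraft $j$ from spacecraft $i$, expressed in the body frame of $i$, is $b_{ij}=R_i^Ts_{ij}$. Set $b_{ijk}=b_{ij}\times b_{ik}$ and $s_{ijk}=s_{ij}\times s_{ik}$. The relative attitude is $Q_{ij}=R_j^TR_i$. For an edge $(i,j)$, a third spacecraft $k=\rho(i,j)=\rho(j,i)$ is assigned, with $p_i,p_j,p_k$ not collinear. Put $a_{ij}=a_{ji}=\|b_{ijk}\|\,\|b_{jik}\|$; this is a nonzero constant. A desired relative attitude $Q^d_{ij}:[0,\infty)\to\mathsf{SO}(3)$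 is smooth, with $\dot Q^d_{ij}=Q^d_{ij}\hat\Omega^d_{ij}$ and $Q^d_{ji}=(Q^d_{ij})^T$. Desired absolute angular velocities $\Omega^d_i(t)$ are $C^1$ functions chosen so that $\Omega^d_{ij}=\Omega^d_i-Q^d_{ji}\Omega^d_j$ for each edge, and $\|\Omega^d_i(t)\|\le B^d$ for all $t\ge0$, for a known constant $B^d>0$. The angular velocity error is $e_{\Omega_i}=\Omega_i-\Omega^d_i$. Error variables for $(i,j,k)$ with $k=\rho(i,j)$: $\Psi^\alpha_{ij}=1+b_{ji}\cdot Q^d_{ij}b_{ij}$, $\Psi^\beta_{ij}=1+\frac{1}{a_{ij}}\,b_{jik}\cdot Q^d_{ij}b_{ijk}$, $e^\alpha_{ij}=(Q^d_{ji}b_{ji})\times b_{ij}$, $e^\beta_{ij}=\frac{1}{a_{ij}}(Q^d_{ji}b_{jik})\times b_{ijk}$. With gains $k^\alpha_{ij}=k^\alpha_{ji}>0$ and $k^\beta_{ij}=k^\beta_{ji}>0$, set $\Psi_{ij}=k^\alpha_{ij}\Psi^\alpha_{ij}+k^\beta_{ij}\Psi^\beta_{ij}$ and $e_{ij}=k^\alpha_{ij}e^\alpha_{ij}+k^\beta_{ij}e^\beta_{ij}$. *)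

(* Defs.v *)
From Stdlib Require Import Reals.
Open Scope R_scope.

Record vec3 := mkV { vx : R; vy : R; vz : R }.

Definition vadd (u v : vec3) : vec3 := mkV (vx u + vx v) (vy u + vy v) (vz u + vz v).
Definition vopp (u : vec3) : vec3 := mkV (- vx u) (- vy u) (- vz u).
Definition vsub (u v : vec3) : vec3 := vadd u (vopp v).
Definition vscale (a : R) (u : vec3) : vec3 := mkV (a * vx u) (a * vy u) (a * vz u).
Definition dot (u v : vec3) : R := vx u * vx v + vy u * vy v + vz u * vz v.
Definition cross (u v : vec3) : vec3 :=
  mkV (vy u * vz v - vz u * vy v) (vz u * vx v - vx u * vz v) (vx u * vy v - vy u * vx v).
Definition norm (u : vec3) : R := sqrt (dot u u).
Definition vzero : vec3 := mkV 0 0 0.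

Record mat3 := mkM { row1 : vec3; row2 : vec3; row3 : vec3 }.

Definition mv (M : mat3) (v : vec3) : vec3 := mkV (dot (row1 M) v) (dot (row2 M) v) (dot (row3 M) v).
Definition mT (M : mat3) : mat3 :=
  mkM (mkV (vx (row1 M)) (vx (row2 M)) (vx (row3 M)))
      (mkV (vy (row1 M)) (vy (row2 M)) (vy (row3 M)))
      (mkV (vz (row1 M)) (vz (row2 M)) (vz (row3 M))).
(* row i of A*B is B^T (row i of A) *)
Definition mm (A B : mat3) : mat3 :=
  mkM (mv (mT B) (row1 A)) (mv (mT B) (row2 A)) (mv (mT B) (row3 A)).
Definition mid : mat3 := mkM (mkV 1 0 0) (mkV 0 1 0) (mkV 0 0 1).
Definition det3 (M : mat3) : R := dot (row1 M) (cross (row2 M) (row3 M)).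
(* hat map: hat w y = w x y *)
Definition hat (w : vec3) : mat3 :=
  mkM (mkV 0 (- vz w) (vy w)) (mkV (vz w) 0 (- vx w)) (mkV (- vy w) (vx w) 0).

Definition SO3 (M : mat3) : Prop := mm (mT M) M = mid /\ det3 M = 1.

Definition vderiv (f : R -> vec3) (v : vec3) (t : R) : Prop :=
  derivable_pt_lim (fun s => vx (f s)) t (vx v) /\
  derivable_pt_lim (fun s => vy (f s)) t (vy v) /\
  derivable_pt_lim (fun s => vz (f s)) t (vz v).
Definition mderiv (F : R -> mat3) (D : mat3) (t : R) : Prop :=
  vderiv (fun s => row1 (F s)) (row1 D) t /\
  vderiv (fun s => row2 (F s)) (row2 D) t /\
  vderiv (fun s => row3 (F s)) (row3 D) t.

Definition vC1_pos (f : R -> vec3) : Prop :=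
  exists df : R -> vec3,
    forall t, 0 < t ->
      vderiv f (df t) t /\
      continuity_pt (fun s => vx (df s)) t /\
      continuity_pt (fun s => vy (df s)) t /\
      continuity_pt (fun s => vz (df s)) t.

Definition sdir (pi pj : vec3) : vec3 := vscale (/ norm (vsub pj pi)) (vsub pj pi).
Definition bvec (Ri : mat3) (pi pj : vec3) : vec3 := mv (mT Ri) (sdir pi pj).
Definition bcross (Ri : mat3) (pi pj pk : vec3) : vec3 :=
  cross (bvec Ri pi pj) (bvec Ri pi pk).
Definition acoef (Ri Rj : mat3) (pi pj pk : vec3) : R :=
  norm (bcross Ri pi pj pk) * norm (bcross Rj pj pi pk).

Definition Psi_alpha (Qdij Ri Rj : mat3) (pi pj : vec3) : R :=
  1 + dot (bvec Rj pj pi) (mv Qdij (bvec Ri pi pj)).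
Definition Psi_beta (Qdij Ri Rj : mat3) (pi pj pk : vec3) : R :=
  1 + / acoef Ri Rj pi pj pk * dot (bcross Rj pj pi pk) (mv Qdij (bcross Ri pi pj pk)).
Definition e_alpha (Qdji Ri Rj : mat3) (pi pj : vec3) : vec3 :=
  cross (mv Qdji (bvec Rj pj pi)) (bvec Ri pi pj).
Definition e_beta (Qdji Ri Rj : mat3) (pi pj pk : vec3) : vec3 :=
  vscale (/ acoef Ri Rj pi pj pk)
         (cross (mv Qdji (bcross Rj pj pi pk)) (bcross Ri pi pj pk)).

Definition Psi_edge (ka kb : R) (Qdij Ri Rj : mat3) (pi pj pk : vec3) : R :=
  ka * Psi_alpha Qdij Ri Rj pi pj + kb * Psi_beta Qdij Ri Rj pi pj pk.
Definition e_edge (ka kb : R) (Qdji Ri Rj : mat3) (pi pj pk : vec3) : vec3 :=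
  vadd (vscale ka (e_alpha Qdji Ri Rj pi pj)) (vscale kb (e_beta Qdji Ri Rj pi pj pk)).

Definition collinear (p q r : vec3) : Prop := cross (vsub q p) (vsub r p) = vzero.

Definition psi_lower (ka kb : R) : R :=
  Rmin ka kb /
  (2 * Rmax (ka ^ 2) (Rmax (kb ^ 2) ((ka - kb) ^ 2)) + 2 * (ka + kb) ^ 2).
Definition psi_upper (ka kb psi : R) : R :=
  Rmin ka kb * (ka + kb) / (Rmin (ka ^ 2) (kb ^ 2) * (2 * Rmin ka kb - psi)).

(* Main.v *)
Require Import Defs.
From Stdlib Require Import Reals Lra Psatz.
Open Scope R_scope.

Lemma vec3_ext (u v : vec3) : vx u = vx v -> vy u = vy v -> vz u = vz v -> u = v.
Proof. destruct u, v; simpl; intros; subst; reflexivity. Qed.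

Ltac vd := repeat match goal with
  | v : vec3 |- _ => let a := fresh "x" in let b := fresh "x" in let c := fresh "x" in destruct v as [a b c]
  | M : mat3 |- _ => let a := fresh "r" in let b := fresh "r" in let c := fresh "r" in destruct M as [a b c] end.

Ltac vring := intros; vd; apply vec3_ext;
  unfold vsub, mm, det3, mv, mT, hat, mid, cross, vadd, vopp, vscale, dot, vzero; simpl; ring.
Ltac sring := intros; vd;
  unfold vsub, mm, det3, mv, mT, hat, mid, cross, vadd, vopp, vscale, dot, vzero; simpl; ring.

Definition cofM (M : mat3) : mat3 :=
  mkM (cross (row2 M) (row3 M)) (cross (row3 M) (row1 M)) (cross (row1 M) (row2 M)).

Lemma sq3_0 (x y z : R) : x^2 + y^2 + z^2 = 0 -> x = 0 /\ y = 0 /\ z = 0.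
Proof. intros; repeat split; nra. Qed.

Lemma so3_eqs (M : mat3) : SO3 M ->
  let m11 := vx (row1 M) in let m12 := vy (row1 M) in let m13 := vz (row1 M) in
  let m21 := vx (row2 M) in let m22 := vy (row2 M) in let m23 := vz (row2 M) in
  let m31 := vx (row3 M) in let m32 := vy (row3 M) in let m33 := vz (row3 M) in
  m11*m11+m21*m21+m31*m31 = 1 /\ m12*m12+m22*m22+m32*m32 = 1 /\ m13*m13+m23*m23+m33*m33 = 1 /\
  m11*m12+m21*m22+m31*m32 = 0 /\ m11*m13+m21*m23+m31*m33 = 0 /\ m12*m13+m22*m23+m32*m33 = 0 /\
  m11*(m22*m33-m23*m32) - m12*(m21*m33-m23*m31) + m13*(m21*m32-m22*m31) = 1.
Proof.
  destruct M as [[a b c] [d e f] [g h i]]; unfold SO3, det3, mm, mT, mv, mid, cross, dot; simpl.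
  intros [H1 H2]. injection H1; intros. repeat split; lra.
Qed.

Lemma so3_cof (M : mat3) : SO3 M -> cofM M = M.
Proof.
  intros H; pose proof (so3_eqs M H) as E; simpl in E.
  destruct M as [[a b c] [d e f] [g h i]]; simpl in E.
  destruct E as (H11 & H22 & H33 & H12 & H13 & H23 & Hd).
  (* columns c1=(a,d,g) c2=(b,e,h) c3=(c,f,i) *)
  assert (C3: (c - (d*h - g*e))^2 + (f - (g*b - a*h))^2 + (i - (a*e - d*b))^2 = 0).
  { assert (E: (c - (d*h - g*e))^2 + (f - (g*b - a*h))^2 + (i - (a*e - d*b))^2 =
      (c*c+f*f+i*i) - 2*(a*(e*i-f*h) - b*(d*i-f*g) + c*(d*h-e*g))
      + ((a*a+d*d+g*g)*(b*b+e*e+h*h) - (a*b+d*e+g*h)^2)) by ring.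
    rewrite E, H11, H22, H33, H12, Hd. ring. }
  assert (C1: (a - (e*i - h*f))^2 + (d - (h*c - b*i))^2 + (g - (b*f - e*c))^2 = 0).
  { assert (E: (a - (e*i - h*f))^2 + (d - (h*c - b*i))^2 + (g - (b*f - e*c))^2 =
      (a*a+d*d+g*g) - 2*(a*(e*i-f*h) - b*(d*i-f*g) + c*(d*h-e*g))
      + ((b*b+e*e+h*h)*(c*c+f*f+i*i) - (b*c+e*f+h*i)^2)) by ring.
    rewrite E, H11, H22, H33, H23, Hd. ring. }
  assert (C2: (b - (f*g - i*d))^2 + (e - (i*a - c*g))^2 + (h - (c*d - f*a))^2 = 0).
  { assert (E: (b - (f*g - i*d))^2 + (e - (i*a - c*g))^2 + (h - (c*d - f*a))^2 =
      (b*b+e*e+h*h) - 2*(a*(e*i-f*h) - b*(d*i-f*g) + c*(d*h-e*g))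
      + ((c*c+f*f+i*i)*(a*a+d*d+g*g) - (a*c+d*f+g*i)^2)) by ring.
    rewrite E, H11, H22, H33, H13, Hd. ring. }
  apply sq3_0 in C1; apply sq3_0 in C2; apply sq3_0 in C3.
  unfold cofM, cross; simpl. f_equal; apply vec3_ext; simpl; lra.
Qed.

Lemma cross_mv_cof M u v : cross (mv M u) (mv M v) = mv (cofM M) (cross u v).
Proof. vring. Qed.
Lemma adj_l M u : mv (mT (cofM M)) (mv M u) = vscale (det3 M) u.
Proof. unfold det3, cofM. vring. Qed.
Lemma adj_r M u : mv M (mv (mT (cofM M)) u) = vscale (det3 M) u.
Proof. unfold det3, cofM. vring. Qed.
Lemma vscale1 u : vscale 1 u = u.
Proof. vring. Qed.

Lemma so3_cross M u v : SO3 M -> cross (mv M u) (mv M v) = mv M (cross u v).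
Proof. intros H. rewrite cross_mv_cof, (so3_cof M H). reflexivity. Qed.
Lemma so3_TM M u : SO3 M -> mv (mT M) (mv M u) = u.
Proof. intros H. pose proof (adj_l M u) as E. rewrite (so3_cof M H) in E.
  rewrite E, (proj2 H). apply vscale1. Qed.
Lemma so3_MT M u : SO3 M -> mv M (mv (mT M) u) = u.
Proof. intros H. pose proof (adj_r M u) as E. rewrite (so3_cof M H) in E.
  rewrite E, (proj2 H). apply vscale1. Qed.
Lemma dot_mv_T M u v : dot u (mv M v) = dot (mv (mT M) u) v.
Proof. sring. Qed.
Lemma dot_comm u v : dot u v = dot v u.
Proof. sring. Qed.
Lemma so3_dot M u v : SO3 M -> dot (mv M u) (mv M v) = dot u v.
Proof. intros H. rewrite dot_comm, dot_mv_T, (so3_TM M _ H). apply dot_comm. Qed.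
Lemma mTT M : mT (mT M) = M.
Proof. vd. reflexivity. Qed.
Lemma det3_mT M : det3 (mT M) = det3 M.
Proof. vd. unfold det3, mT, cross, dot; simpl; ring. Qed.
Lemma mat3_ext (A B : mat3) : (forall u, mv A u = mv B u) -> A = B.
Proof. intros H. destruct A as [a1 a2 a3], B as [b1 b2 b3].
  pose proof (H (mkV 1 0 0)) as E1; pose proof (H (mkV 0 1 0)) as E2; pose proof (H (mkV 0 0 1)) as E3.
  unfold mv, dot in *; simpl in *. destruct a1,a2,a3,b1,b2,b3; simpl in *.
  injection E1; injection E2; injection E3; intros. f_equal; f_equal; lra. Qed.
Lemma mv_mm A B u : mv (mm A B) u = mv A (mv B u).
Proof. vring. Qed.
Lemma mv_mid u : mv mid u = u.
Proof. vring. Qed.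
Lemma so3_T M : SO3 M -> SO3 (mT M).
Proof. intros H. split.
  - rewrite mTT. apply mat3_ext; intro u. rewrite mv_mm, mv_mid. apply so3_MT; exact H.
  - rewrite det3_mT. apply H. Qed.
Lemma norm_so3 M u : SO3 M -> norm (mv M u) = norm u.
Proof. intros H. unfold norm. rewrite so3_dot by exact H. reflexivity. Qed.

Lemma dot_ge0 u : 0 <= dot u u.
Proof. vd; unfold dot; simpl; nra. Qed.
Lemma norm_ge0 u : 0 <= norm u.
Proof. apply sqrt_pos. Qed.
Lemma norm_sq u : norm u ^ 2 = dot u u.
Proof. unfold norm. rewrite <- Rsqr_pow2. apply Rsqr_sqrt, dot_ge0. Qed.
Lemma norm_le x B : 0 <= B -> dot x x <= B ^ 2 -> norm x <= B.
Proof. intros HB H. unfold norm. rewrite <- (sqrt_pow2 B HB). apply sqrt_le_1_alt. exact H. Qed.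
Lemma lagrange u v : dot (cross u v) (cross u v) = dot u u * dot v v - (dot u v)^2.
Proof. sring. Qed.
Lemma cauchy u v : (dot u v)^2 <= dot u u * dot v v.
Proof. pose proof (lagrange u v). pose proof (dot_ge0 (cross u v)). lra. Qed.
Lemma norm_cross_le u v : norm (cross u v) <= norm u * norm v.
Proof. apply norm_le. pose proof (norm_ge0 u); pose proof (norm_ge0 v); nra.
  rewrite lagrange. rewrite Rpow_mult_distr, !norm_sq. pose proof (pow2_ge_0 (dot u v)). lra. Qed.
Lemma dot_add_l u v w : dot (vadd u v) w = dot u w + dot v w.
Proof. sring. Qed.
Lemma norm_add_le u v : norm (vadd u v) <= norm u + norm v.
Proof. apply norm_le. pose proof (norm_ge0 u); pose proof (norm_ge0 v); lra.
  assert (E: dot (vadd u v) (vadd u v) = dot u u + 2 * dot u v + dot v v) by sring.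
  rewrite E. pose proof (cauchy u v). rewrite <- !norm_sq in *.
  assert (dot u v <= norm u * norm v).
  { pose proof (norm_ge0 u); pose proof (norm_ge0 v).
    assert (dot u v ^2 <= (norm u * norm v)^2) by (rewrite Rpow_mult_distr; lra).
    apply Rsqr_incr_0_var. rewrite !Rsqr_pow2. lra. nra. }
  nra. Qed.
Lemma norm_scale k u : norm (vscale k u) = Rabs k * norm u.
Proof. unfold norm. assert (E: dot (vscale k u) (vscale k u) = k^2 * dot u u) by sring.
  rewrite E, sqrt_mult_alt by apply pow2_ge_0. rewrite <- Rsqr_pow2, sqrt_Rsqr_abs. reflexivity. Qed.
Lemma norm_opp u : norm (vopp u) = norm u.
Proof. unfold norm. f_equal. sring. Qed.
Lemma norm0_eq u : norm u = 0 -> u = vzero.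
Proof. intros H. assert (E: dot u u = 0). { rewrite <- norm_sq, H. ring. }
  vd. unfold dot in E; simpl in E. apply vec3_ext; unfold vzero; simpl; nra. Qed.

Lemma D_eq f x a b : derivable_pt_lim f x a -> a = b -> derivable_pt_lim f x b.
Proof. intros H ->; exact H. Qed.
Lemma D_plus f g x a b : derivable_pt_lim f x a -> derivable_pt_lim g x b ->
  derivable_pt_lim (fun s => f s + g s) x (a + b).
Proof. intros. apply (derivable_pt_lim_plus f g); assumption. Qed.
Lemma D_minus f g x a b : derivable_pt_lim f x a -> derivable_pt_lim g x b ->
  derivable_pt_lim (fun s => f s - g s) x (a - b).
Proof. intros. apply (derivable_pt_lim_minus f g); assumption. Qed.
Lemma D_mult f g x a b : derivable_pt_lim f x a -> derivable_pt_lim g x b ->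
  derivable_pt_lim (fun s => f s * g s) x (a * g x + f x * b).
Proof. intros. apply (derivable_pt_lim_mult f g); assumption. Qed.
Lemma D_opp f x a : derivable_pt_lim f x a -> derivable_pt_lim (fun s => - f s) x (- a).
Proof. intros. apply (derivable_pt_lim_opp f); assumption. Qed.
Lemma D_const c x : derivable_pt_lim (fun _ => c) x 0.
Proof. apply derivable_pt_lim_const. Qed.
Lemma D_scal k f x a : derivable_pt_lim f x a -> derivable_pt_lim (fun s => k * f s) x (k * a).
Proof. intros. apply (derivable_pt_lim_scal f); assumption. Qed.

Lemma vderiv_eq f a b t : vderiv f a t -> a = b -> vderiv f b t.
Proof. intros H ->; exact H. Qed.

Ltac dsolve := repeat first [ apply D_plus | apply D_minus | apply D_mult | apply D_opp | apply D_const | eassumption ].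

Lemma D_dot u v du dv t : vderiv u du t -> vderiv v dv t ->
  derivable_pt_lim (fun s => dot (u s) (v s)) t (dot du (v t) + dot (u t) dv).
Proof. intros (Hu1 & Hu2 & Hu3) (Hv1 & Hv2 & Hv3). unfold dot.
  eapply D_eq. dsolve. cbv beta; ring. Qed.

Lemma vderiv_cross u v du dv t : vderiv u du t -> vderiv v dv t ->
  vderiv (fun s => cross (u s) (v s)) (vadd (cross du (v t)) (cross (u t) dv)) t.
Proof. intros (Hu1 & Hu2 & Hu3) (Hv1 & Hv2 & Hv3). unfold vderiv, cross, vadd; simpl.
  repeat split; (eapply D_eq; [dsolve | cbv beta; ring]). Qed.

Lemma vderiv_mv M D v dv t : mderiv M D t -> vderiv v dv t ->
  vderiv (fun s => mv (M s) (v s)) (vadd (mv D (v t)) (mv (M t) dv)) t.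
Proof. intros (H1 & H2 & H3) Hv. unfold vderiv; unfold mv at 1; unfold vadd; simpl.
  repeat split; (eapply D_eq; [apply D_dot; eassumption | unfold mv; simpl; ring]). Qed.

Lemma mderiv_mT M D t : mderiv M D t -> mderiv (fun s => mT (M s)) (mT D) t.
Proof. intros ((H11 & H12 & H13) & (H21 & H22 & H23) & (H31 & H32 & H33)).
  unfold mT; simpl. repeat split; assumption. Qed.

Lemma vderiv_const c t : vderiv (fun _ => c) vzero t.
Proof. repeat split; apply D_const. Qed.

Lemma vderiv_add u v du dv t : vderiv u du t -> vderiv v dv t ->
  vderiv (fun s => vadd (u s) (v s)) (vadd du dv) t.
Proof. intros (Hu1 & Hu2 & Hu3) (Hv1 & Hv2 & Hv3). unfold vderiv, vadd; simpl.
  repeat split; apply D_plus; assumption. Qed.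

Lemma vderiv_scale k u du t : vderiv u du t ->
  vderiv (fun s => vscale k (u s)) (vscale k du) t.
Proof. intros (Hu1 & Hu2 & Hu3). unfold vderiv, vscale; simpl.
  repeat split; apply D_scal; assumption. Qed.

Lemma dlim_loc f g t l : 0 < t -> (forall s, 0 <= s -> f s = g s) ->
  derivable_pt_lim g t l -> derivable_pt_lim f t l.
Proof. intros Ht Hfg Hg eps Heps. destruct (Hg eps Heps) as [d Hd].
  assert (Hpos: 0 < Rmin d t) by (apply Rmin_pos; [apply cond_pos | exact Ht]).
  exists (mkposreal _ Hpos). intros h Hh Hlt. simpl in Hlt.
  assert (Rabs h < t) by (apply Rlt_le_trans with (1 := Hlt), Rmin_r).
  apply Rabs_def2 in H.
  rewrite !Hfg by lra. apply Hd; auto. apply Rlt_le_trans with (1 := Hlt), Rmin_l. Qed.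

Lemma vderiv_loc f g d t : 0 < t -> (forall s, 0 <= s -> f s = g s) ->
  vderiv g d t -> vderiv f d t.
Proof. intros Ht Hfg (H1 & H2 & H3). repeat split;
  (eapply dlim_loc; [exact Ht | intros s Hs; rewrite Hfg by exact Hs; reflexivity | assumption]). Qed.

Lemma mv_opp M u : mv M (vopp u) = vopp (mv M u).
Proof. vring. Qed.
Lemma mv_sub M u v : mv M (vsub u v) = vsub (mv M u) (mv M v).
Proof. vring. Qed.
Lemma mv_add M u v : mv M (vadd u v) = vadd (mv M u) (mv M v).
Proof. vring. Qed.
Lemma mv_scale M k u : mv M (vscale k u) = vscale k (mv M u).
Proof. vring. Qed.

Lemma vderiv_RTx (Rf : R -> mat3) W x t : mderiv Rf (mm (Rf t) (hat W)) t ->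
  vderiv (fun s => mv (mT (Rf s)) x) (vopp (cross W (mv (mT (Rf t)) x))) t.
Proof. intros H. eapply vderiv_eq. apply vderiv_mv. apply mderiv_mT, H. apply vderiv_const.
  vring. Qed.

Definition Tf (Ri Rj Qp : R -> mat3) (x y : vec3) (s : R) : vec3 :=
  cross (mv (Qp s) (mv (mT (Rj s)) x)) (mv (mT (Ri s)) y).

Lemma T_deriv (Ri Rj Qp : R -> mat3) (DQ : mat3) (x y Wi Wj Wdi Wdj w : vec3) t :
  mderiv Ri (mm (Ri t) (hat Wi)) t -> mderiv Rj (mm (Rj t) (hat Wj)) t -> mderiv Qp DQ t ->
  (forall z, mv DQ z = vopp (cross w (mv (Qp t) z))) -> w = vsub Wdi (mv (Qp t) Wdj) -> SO3 (Qp t) ->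
  vderiv (Tf Ri Rj Qp x y)
   (vadd (cross (Tf Ri Rj Qp x y t) Wdi)
     (vadd (cross (cross (mv (Qp t) (mv (mT (Rj t)) x)) (mv (Qp t) (vsub Wj Wdj))) (mv (mT (Ri t)) y))
           (cross (mv (Qp t) (mv (mT (Rj t)) x)) (cross (mv (mT (Ri t)) y) (vsub Wi Wdi))))) t.
Proof. intros Hi Hj HQ HDQ Hw HSO. unfold Tf.
  eapply vderiv_eq. apply vderiv_cross. apply vderiv_mv. exact HQ. apply vderiv_RTx; exact Hj.
  apply vderiv_RTx; exact Hi.
  rewrite HDQ, mv_opp, <- (so3_cross _ _ _ HSO), Hw, mv_sub.
  generalize (mv (Qp t) Wj) (mv (Qp t) Wdj) (mv (Qp t) (mv (mT (Rj t)) x)) (mv (mT (Ri t)) y).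
  vring. Qed.

Lemma T_bound (Q : mat3) c Y e1 e2 : SO3 Q ->
  norm (vadd (cross (cross c (mv Q e2)) Y) (cross c (cross Y e1))) <= norm c * norm Y * (norm e1 + norm e2).
Proof. intros H.
  eapply Rle_trans. apply norm_add_le.
  pose proof (norm_cross_le (cross c (mv Q e2)) Y). pose proof (norm_cross_le c (mv Q e2)).
  pose proof (norm_cross_le c (cross Y e1)). pose proof (norm_cross_le Y e1).
  rewrite (norm_so3 _ _ H) in *.
  pose proof (norm_ge0 c); pose proof (norm_ge0 Y); pose proof (norm_ge0 e1); pose proof (norm_ge0 e2).
  pose proof (norm_ge0 (cross c e2)). 
  assert (norm (cross (cross c (mv Q e2)) Y) <= norm c * norm e2 * norm Y).
  { eapply Rle_trans. eassumption. apply Rmult_le_compat_r; auto. }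
  assert (norm (cross c (cross Y e1)) <= norm c * (norm Y * norm e1)).
  { eapply Rle_trans. eassumption. apply Rmult_le_compat_l; auto. }
  nra. Qed.

Lemma cross_add_l u v w : cross (vadd u v) w = vadd (cross u w) (cross v w).
Proof. vring. Qed.

Lemma edge_deriv (Ri Rj Qp : R -> mat3) (DQ : mat3) (x y x' y' Wi Wj Wdi Wdj w : vec3)
  (E : R -> vec3) (ka kb Bd t : R) :
  0 < t ->
  mderiv Ri (mm (Ri t) (hat Wi)) t -> mderiv Rj (mm (Rj t) (hat Wj)) t -> mderiv Qp DQ t ->
  (forall z, mv DQ z = vopp (cross w (mv (Qp t) z))) -> w = vsub Wdi (mv (Qp t) Wdj) ->
  SO3 (Qp t) -> SO3 (Ri t) -> SO3 (Rj t) ->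
  norm x = 1 -> norm y = 1 -> 0 < norm x' * norm y' -> 0 < ka -> 0 < kb -> norm Wdi <= Bd ->
  (forall s, 0 <= s -> E s = vadd (vscale ka (Tf Ri Rj Qp x y s))
                               (vscale kb (vscale (/ (norm x' * norm y')) (Tf Ri Rj Qp x' y' s)))) ->
  exists dE, vderiv E dE t /\
    norm dE <= (ka + kb) * (norm (vsub Wi Wdi) + norm (vsub Wj Wdj)) + Bd * norm (E t).
Proof.
  intros Ht Hi Hj HQ HDQ Hw HSQ HSi HSj Hx Hy Ha Hka Hkb HB HE.
  set (ia := / (norm x' * norm y')).
  pose proof (T_deriv Ri Rj Qp DQ x y Wi Wj Wdi Wdj w t Hi Hj HQ HDQ Hw HSQ) as D1.
  pose proof (T_deriv Ri Rj Qp DQ x' y' Wi Wj Wdi Wdj w t Hi Hj HQ HDQ Hw HSQ) as D2.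
  eexists. split.
  - eapply vderiv_loc. exact Ht. exact HE.
    apply vderiv_add. apply vderiv_scale, D1. apply vderiv_scale, vderiv_scale, D2.
  - set (A1 := vadd (cross (cross (mv (Qp t) (mv (mT (Rj t)) x)) (mv (Qp t) (vsub Wj Wdj))) (mv (mT (Ri t)) y))
           (cross (mv (Qp t) (mv (mT (Rj t)) x)) (cross (mv (mT (Ri t)) y) (vsub Wi Wdi)))).
    set (A2 := vadd (cross (cross (mv (Qp t) (mv (mT (Rj t)) x')) (mv (Qp t) (vsub Wj Wdj))) (mv (mT (Ri t)) y'))
           (cross (mv (Qp t) (mv (mT (Rj t)) x')) (cross (mv (mT (Ri t)) y') (vsub Wi Wdi)))).
    assert (B1 := T_bound (Qp t) (mv (Qp t) (mv (mT (Rj t)) x)) (mv (mT (Ri t)) y) (vsub Wi Wdi) (vsub Wj Wdj) HSQ).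
    assert (B2 := T_bound (Qp t) (mv (Qp t) (mv (mT (Rj t)) x')) (mv (mT (Ri t)) y') (vsub Wi Wdi) (vsub Wj Wdj) HSQ).
    fold A1 in B1. fold A2 in B2.
    pose proof (so3_T _ HSi) as HTi. pose proof (so3_T _ HSj) as HTj.
    rewrite !(norm_so3 _ _ HSQ), !(norm_so3 _ _ HTj), !(norm_so3 _ _ HTi), Hx, Hy in *.
    rewrite (HE t (Rlt_le _ _ Ht)).
    assert (Eq: vadd (vscale ka (vadd (cross (Tf Ri Rj Qp x y t) Wdi) A1))
       (vscale kb (vscale ia (vadd (cross (Tf Ri Rj Qp x' y' t) Wdi) A2))) =
       vadd (cross (vadd (vscale ka (Tf Ri Rj Qp x y t)) (vscale kb (vscale ia (Tf Ri Rj Qp x' y' t)))) Wdi)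
            (vadd (vscale ka A1) (vscale kb (vscale ia A2)))) by vring.
    fold ia. rewrite Eq; clear Eq.
    set (EE := vadd (vscale ka (Tf Ri Rj Qp x y t)) (vscale kb (vscale ia (Tf Ri Rj Qp x' y' t)))).
    eapply Rle_trans. apply norm_add_le.
    eapply Rle_trans. apply Rplus_le_compat. apply norm_cross_le. apply norm_add_le.
    rewrite !norm_scale, !Rabs_right in * by (unfold ia; try apply Rle_ge, Rlt_le, Rinv_0_lt_compat; lra).
    pose proof (norm_ge0 EE). pose proof (norm_ge0 A1). pose proof (norm_ge0 A2).
    pose proof (norm_ge0 (vsub Wi Wdi)). pose proof (norm_ge0 (vsub Wj Wdj)).
    assert (Hia: ia * (norm x' * norm y') = 1) by (unfold ia; apply Rinv_l; lra).
    assert (ia * norm A2 <= norm (vsub Wi Wdi) + norm (vsub Wj Wdj)).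
    { assert (0 < ia) by (unfold ia; apply Rinv_0_lt_compat; lra).
      apply Rmult_le_compat_l with (r := ia) in B2; [|lra]. nra. }
    assert (norm EE * norm Wdi <= Bd * norm EE) by nra.
    nra.
Qed.


Lemma mv_hat w u : mv (hat w) u = cross w u.
Proof. vring. Qed.

Lemma P_deriv (R1 R2 Q : R -> mat3) x y W1 W2 Wd1 Wd2 Wd12 t :
  mderiv R1 (mm (R1 t) (hat W1)) t -> mderiv R2 (mm (R2 t) (hat W2)) t ->
  mderiv Q (mm (Q t) (hat Wd12)) t -> Wd12 = vsub Wd1 (mv (mT (Q t)) Wd2) -> SO3 (Q t) ->
  derivable_pt_lim (fun s => dot (mv (mT (R2 s)) x) (mv (Q s) (mv (mT (R1 s)) y))) t
   (dot (cross (mv (mT (Q t)) (mv (mT (R2 t)) x)) (mv (mT (R1 t)) y)) (vsub W1 Wd1) +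
    dot (cross (mv (Q t) (mv (mT (R1 t)) y)) (mv (mT (R2 t)) x)) (vsub W2 Wd2)).
Proof. intros H1 H2 HQ Hw HS.
  eapply D_eq. apply D_dot. apply vderiv_RTx, H2. apply vderiv_mv. exact HQ. apply vderiv_RTx, H1.
  rewrite Hw, mv_mm, <- mv_add.
  set (X := mv (mT (R2 t)) x). set (Y := mv (mT (R1 t)) y).
  rewrite (dot_mv_T (Q t) X).
  assert (K: dot (mv (mT (Q t)) X) (cross (mv (mT (Q t)) Wd2) Y) = dot X (cross Wd2 (mv (Q t) Y))).
  { pose proof (so3_T _ HS) as HT. rewrite <- (so3_TM (Q t) Y HS) at 1.
    rewrite (so3_cross _ _ _ HT), (so3_dot _ _ _ HT). reflexivity. }
  revert K. rewrite mv_hat.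
  generalize (mv (mT (Q t)) X) (mv (mT (Q t)) Wd2) (mv (Q t) Y). clearbody X Y. intros c V QY K.
  match goal with |- ?L = ?Rr =>
    assert (Id: L - Rr = - (dot c (cross V Y) - dot X (cross Wd2 QY))) by (clear K; sring) end.
  lra. Qed.
Lemma cross_QT_Q (Q : mat3) Y X : SO3 Q ->
  mv (mT Q) (cross (mv Q Y) X) = vopp (cross (mv (mT Q) X) Y).
Proof. intros H. pose proof (so3_T _ H) as HT.
  rewrite <- (so3_cross (mT Q) (mv Q Y) X HT), (so3_TM _ _ H). generalize (mv (mT Q) X). clear. vring. Qed.

Lemma part_i (Q : mat3) (A B C D : vec3) ka kb a : SO3 Q ->
  vadd (vscale ka (cross (mv (mT Q) A) B)) (vscale kb (vscale a (cross (mv (mT Q) C) D))) =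
  vopp (mv (mT Q) (vadd (vscale ka (cross (mv Q B) A)) (vscale kb (vscale a (cross (mv Q D) C))))).
Proof. intros H. rewrite mv_add, !mv_scale, !(cross_QT_Q _ _ _ H). vring. Qed.

Lemma Xpos (a b c d p q : R) : a*a+c*c+p*p=1 -> b*b+d*d+q*q=1 -> a*b+c*d+p*q=0 -> b*c <= (1-a)*(1-d).
Proof. intros H0 H1 H2.
set (X := 1 - a - d + a*d - b*c).
assert (E: 4*X - X*X - (c*q-p*d+p)^2 - (p*b-a*q+q)^2 - (c-b)^2 =
  (-1 - q^2 + 2*d - d^2 - b^2)*(a*a+c*c+p*p-1) + (-2+2*a)*(b*b+d*d+q*q-1) + (p*q-2*c+c*d-2*b+a*b)*(a*b+c*d+p*q)) by (unfold X; ring).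
assert (h0: a*a+c*c+p*p-1 = 0) by lra. assert (h1: b*b+d*d+q*q-1 = 0) by lra.
rewrite h0, h1, H2, !Rmult_0_r, !Rplus_0_r in E.
assert (0 <= X). { pose proof (pow2_ge_0 (c*q-p*d+p)). pose proof (pow2_ge_0 (p*b-a*q+q)). pose proof (pow2_ge_0 (c-b)). pose proof (Rle_0_sqr X). unfold Rsqr in *. lra. } unfold X in *. lra. Qed.

Lemma gram2 x y u u' : dot x (cross u u') * dot y (cross u u') =
  dot x y * (dot u u * dot u' u' - dot u u' ^2) - dot x u * (dot u y * dot u' u' - dot u u' * dot u' y)
  + dot x u' * (dot u y * dot u u' - dot u u * dot u' y).
Proof. sring. Qed.

Lemma pairs_ineq (u u' v v' : vec3) ka kb : dot u u = 1 -> dot u' u' = 1 -> dot u u' = 0 ->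
  dot v v = 1 -> dot v' v' = 1 -> dot v v' = 0 -> 0 < ka -> 0 < kb ->
  let Psi := ka*(1 - dot u v) + kb*(1 - dot u' v') in
  let e := vadd (vscale ka (cross u v)) (vscale kb (cross u' v')) in
  0 <= Psi /\ dot e e <= 4 * Rmax ka kb * Psi /\ Psi * (2 * Rmin ka kb - Psi) <= dot e e.
Proof.
  intros Hu Hu' Huu Hv Hv' Hvv Hka Hkb Psi e.
  set (a := dot u v). set (b := dot u v'). set (c := dot u' v). set (d := dot u' v').
  set (p := dot v (cross u u')). set (q := dot v' (cross u u')).
  assert (E1: a*a+c*c+p*p = 1).
  { pose proof (gram2 v v u u') as G. rewrite Hu, Hu', Huu, Hv in G. fold p in G.
    rewrite (dot_comm v u), (dot_comm v u') in G. fold a c in G. lra. }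
  assert (E2: b*b+d*d+q*q = 1).
  { pose proof (gram2 v' v' u u') as G. rewrite Hu, Hu', Huu, Hv' in G. fold q in G.
    rewrite (dot_comm v' u), (dot_comm v' u') in G. fold b d in G. lra. }
  assert (E3: a*b+c*d+p*q = 0).
  { pose proof (gram2 v v' u u') as G. rewrite Hu, Hu', Huu, Hvv in G. fold p q in G.
    rewrite (dot_comm v u), (dot_comm v u') in G. fold a b c d in G. lra. }
  assert (B1: a*a + b*b <= 1).
  { pose proof (gram2 u u v v') as G. rewrite Hu, Hv, Hv', Hvv, (dot_comm v u), (dot_comm v' u) in G. fold a b in G.
    pose proof (Rle_0_sqr (dot u (cross v v'))). unfold Rsqr in *. lra. }
  assert (B2: c*c + d*d <= 1).
  { pose proof (gram2 u' u' v v') as G. rewrite Hu', Hv, Hv', Hvv, (dot_comm v u'), (dot_comm v' u') in G. fold c d in G.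
    pose proof (Rle_0_sqr (dot u' (cross v v'))). unfold Rsqr in *. lra. }
  pose proof (Xpos a b c d p q E1 E2 E3) as HX.
  assert (Ee: dot e e = ka^2*(1 - a^2) + kb^2*(1 - d^2) - 2*ka*kb*(b*c)).
  { assert (Id: dot e e = ka^2*(dot u u * dot v v - a^2) + kb^2*(dot u' u' * dot v' v' - d^2)
       + 2*ka*kb*(dot u u' * dot v v' - b*c)) by (unfold e, a, b, c, d; sring).
    rewrite Id, Hu, Hu', Huu, Hv, Hv', Hvv. ring. }
  assert (Ha1: a <= 1) by nra. assert (Hd1: d <= 1) by nra.
  assert (Ha2: -1 <= a) by nra. assert (Hd2: -1 <= d) by nra.
  assert (HP: Psi = ka*(1-a) + kb*(1-d)) by reflexivity.
  split; [|split].
  - nra.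
  - rewrite Ee.
    assert (2*ka*kb*(-(b*c)) <= ka^2*(c*c) + kb^2*(b*b)).
    { pose proof (pow2_ge_0 (ka*c + kb*b)). nra. }
    assert (H2: ka^2*(1 - a^2) + kb^2*(1 - d^2) - 2*ka*kb*(b*c) <= 2*ka^2*(1-a^2) + 2*kb^2*(1-d^2)).
    { assert (c*c <= 1 - a*a) by nra. assert (b*b <= 1 - d*d) by nra.
      pose proof (pow2_ge_0 ka); pose proof (pow2_ge_0 kb). nra. }
    assert (H3: 2*ka^2*(1-a^2) + 2*kb^2*(1-d^2) <= 4*ka^2*(1-a) + 4*kb^2*(1-d)).
    { pose proof (Rmult_le_pos _ _ (pow2_ge_0 ka) (pow2_ge_0 (1-a))).
      pose proof (Rmult_le_pos _ _ (pow2_ge_0 kb) (pow2_ge_0 (1-d))). lra. }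
    assert (H4: 4*ka^2*(1-a) + 4*kb^2*(1-d) <= 4 * Rmax ka kb * Psi).
    { rewrite HP. pose proof (Rmax_l ka kb); pose proof (Rmax_r ka kb).
      assert (0 <= (Rmax ka kb - ka) * (ka * (1-a))) by (apply Rmult_le_pos; [lra | apply Rmult_le_pos; lra]).
      assert (0 <= (Rmax ka kb - kb) * (kb * (1-d))) by (apply Rmult_le_pos; [lra | apply Rmult_le_pos; lra]).
      lra. }
    lra.
  - rewrite Ee.
    assert (2*ka*kb*(b*c) <= 2*ka*kb*((1-a)*(1-d))).
    { apply Rmult_le_compat_l; [nra | exact HX]. }
    assert (Hm: Rmin ka kb * Psi <= ka^2*(1-a) + kb^2*(1-d)).
    { rewrite HP. pose proof (Rmin_l ka kb); pose proof (Rmin_r ka kb).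
      assert (0 <= (ka - Rmin ka kb) * (ka * (1-a))) by (apply Rmult_le_pos; [lra | apply Rmult_le_pos; lra]).
      assert (0 <= (kb - Rmin ka kb) * (kb * (1-d))) by (apply Rmult_le_pos; [lra | apply Rmult_le_pos; lra]).
      lra. }
    rewrite HP in *. nra.
Qed.


Lemma dot_opp u v : dot (vopp u) (vopp v) = dot u v.
Proof. sring. Qed.
Lemma dot_scale2 k l u v : dot (vscale k u) (vscale l v) = k * l * dot u v.
Proof. sring. Qed.

Lemma dot_scale_r k u v : dot u (vscale k v) = k * dot u v.
Proof. sring. Qed.

Lemma static_ineq (Q : mat3) (X Y X' Y' : vec3) ka kb : SO3 Q ->
  dot X X = 1 -> dot Y Y = 1 -> dot X X' = 0 -> dot Y Y' = 0 -> 0 < norm X' -> 0 < norm Y' ->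
  0 < ka -> 0 < kb ->
  let a := norm Y' * norm X' in
  let Psi := ka * (1 + dot X (mv Q Y)) + kb * (1 + / a * dot X' (mv Q Y')) in
  let e := vadd (vscale ka (cross (mv (mT Q) X) Y)) (vscale kb (vscale (/ a) (cross (mv (mT Q) X') Y'))) in
  0 <= Psi /\ dot e e <= 4 * Rmax ka kb * Psi /\ Psi * (2 * Rmin ka kb - Psi) <= dot e e.
Proof.
  intros HQ HX HY HXX HYY HnX HnY Hka Hkb a Psi e.
  set (iy := / norm Y'). set (ix := / norm X').
  assert (Ha: / a = iy * ix) by (unfold a, iy, ix; apply Rinv_mult).
  assert (Hiy: iy * iy * dot Y' Y' = 1).
  { rewrite <- norm_sq. unfold iy. field. lra. }
  assert (Hix: ix * ix * dot X' X' = 1).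
  { rewrite <- norm_sq. unfold ix. field. lra. }
  pose proof (so3_T _ HQ) as HT.
  assert (HX2: dot (mv (mT Q) X) (mv (mT Q) X) = 1) by (rewrite (so3_dot _ _ _ HT); exact HX).
  assert (HX3: dot (mv (mT Q) X') (mv (mT Q) X') = dot X' X') by (rewrite (so3_dot _ _ _ HT); reflexivity).
  assert (HX4: dot (mv (mT Q) X) (mv (mT Q) X') = 0) by (rewrite (so3_dot _ _ _ HT); exact HXX).
  assert (EP: Psi = ka * (1 - dot Y (vopp (mv (mT Q) X))) +
                    kb * (1 - dot (vscale iy Y') (vscale ix (vopp (mv (mT Q) X'))))).
  { unfold Psi. rewrite Ha, (dot_mv_T Q X Y), (dot_mv_T Q X' Y').
    generalize (mv (mT Q) X) (mv (mT Q) X'). intros c c'. clear. sring. }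
  assert (Ee: e = vadd (vscale ka (cross Y (vopp (mv (mT Q) X))))
                       (vscale kb (cross (vscale iy Y') (vscale ix (vopp (mv (mT Q) X')))))).
  { unfold e. rewrite Ha. generalize (mv (mT Q) X) (mv (mT Q) X'). intros c c'. clear. vring. }
  rewrite EP, Ee. apply pairs_ineq; auto.
  - rewrite dot_scale2. lra.
  - rewrite dot_scale_r, HYY. ring.
  - rewrite dot_opp. exact HX2.
  - rewrite dot_scale2, dot_opp, HX3. lra.
  - rewrite dot_scale_r, dot_opp, HX4. ring.
Qed.

Lemma norm_pos_nz u : u <> vzero -> 0 < norm u.
Proof. intros H. destruct (norm_ge0 u) as [Hl|He]; auto. exfalso; apply H, norm0_eq; auto. Qed.

Lemma sdir_unit p q : vsub q p <> vzero -> dot (sdir p q) (sdir p q) = 1.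
Proof. intros H. pose proof (norm_pos_nz _ H) as Hn. unfold sdir.
  rewrite dot_scale2, <- norm_sq. field. lra. Qed.

Lemma cross_scale a b x y : cross (vscale a x) (vscale b y) = vscale (a*b) (cross x y).
Proof. vring. Qed.

Lemma noncol_facts p1 p2 p3 : ~ collinear p1 p2 p3 ->
  vsub p2 p1 <> vzero /\ vsub p1 p2 <> vzero /\ vsub p3 p1 <> vzero /\ vsub p3 p2 <> vzero /\
  0 < norm (cross (sdir p1 p2) (sdir p1 p3)) /\ 0 < norm (cross (sdir p2 p1) (sdir p2 p3)).
Proof. intros H. unfold collinear in H.
  assert (H21: vsub p2 p1 <> vzero).
  { intro E. apply H. rewrite E. vring. }
  assert (H12: vsub p1 p2 <> vzero).
  { intro E. apply H21. assert (vsub p2 p1 = vopp (vsub p1 p2)) as -> by vring. rewrite E. vring. }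
  assert (H31: vsub p3 p1 <> vzero).
  { intro E. apply H. rewrite E. vring. }
  assert (H32: vsub p3 p2 <> vzero).
  { intro E. apply H. assert (vsub p3 p1 = vadd (vsub p3 p2) (vsub p2 p1)) as -> by vring.
    rewrite E. vring. }
  pose proof (norm_pos_nz _ H21) as n21. pose proof (norm_pos_nz _ H12) as n12.
  pose proof (norm_pos_nz _ H31) as n31. pose proof (norm_pos_nz _ H32) as n32.
  assert (HN: 0 < norm (cross (vsub p2 p1) (vsub p3 p1))) by (apply norm_pos_nz; exact H).
  repeat split; auto.
  - unfold sdir. rewrite cross_scale, norm_scale.
    apply Rmult_lt_0_compat; auto. apply Rabs_pos_lt.
    apply Rmult_integral_contrapositive; split; apply Rinv_neq_0_compat; lra.
  - unfold sdir. rewrite cross_scale, norm_scale.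
    assert (E: cross (vsub p1 p2) (vsub p3 p2) = vopp (cross (vsub p2 p1) (vsub p3 p1))) by vring.
    rewrite E, norm_opp.
    apply Rmult_lt_0_compat; auto. apply Rabs_pos_lt.
    apply Rmult_integral_contrapositive; split; apply Rinv_neq_0_compat; lra.
Qed.

Lemma dot_cross_self u v : dot u (cross u v) = 0.
Proof. sring. Qed.

Lemma mvDQ_T (Q : mat3) w z : mv (mT (mm Q (hat w))) z = vopp (cross w (mv (mT Q) z)).
Proof. vring. Qed.

Theorem proposition1
  (p1 p2 p3 : vec3)
  (R1 R2 R3 : R -> mat3)
  (Om1 Om2 Omd1 Omd2 Omd12 : R -> vec3)
  (Qd12 : R -> mat3)
  (ka kb Bd : R)
  (Hncol : ~ collinear p1 p2 p3)
  (HSO1 : forall t, 0 <= t -> SO3 (R1 t))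
  (HSO2 : forall t, 0 <= t -> SO3 (R2 t))
  (HSO3 : forall t, 0 <= t -> SO3 (R3 t))
  (Hkin1 : forall t, 0 < t -> mderiv R1 (mm (R1 t) (hat (Om1 t))) t)
  (Hkin2 : forall t, 0 < t -> mderiv R2 (mm (R2 t) (hat (Om2 t))) t)
  (HQso : forall t, 0 <= t -> SO3 (Qd12 t))
  (HQd : forall t, 0 < t -> mderiv Qd12 (mm (Qd12 t) (hat (Omd12 t))) t)
  (HOmd12 : forall t, 0 <= t -> Omd12 t = vsub (Omd1 t) (mv (mT (Qd12 t)) (Omd2 t)))
  (HC1_1 : vC1_pos Omd1) (HC1_2 : vC1_pos Omd2)
  (HBd : 0 < Bd)
  (HB1 : forall t, 0 <= t -> norm (Omd1 t) <= Bd)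
  (HB2 : forall t, 0 <= t -> norm (Omd2 t) <= Bd)
  (Hka : 0 < ka) (Hkb : 0 < kb) (Hkab : ka <> kb) :
  let Psi12 := fun t => Psi_edge ka kb (Qd12 t) (R1 t) (R2 t) p1 p2 p3 in
  let e12 := fun t => e_edge ka kb (mT (Qd12 t)) (R1 t) (R2 t) p1 p2 p3 in
  let e21 := fun t => e_edge ka kb (Qd12 t) (R2 t) (R1 t) p2 p1 p3 in
  let eOm1 := fun t => vsub (Om1 t) (Omd1 t) in
  let eOm2 := fun t => vsub (Om2 t) (Omd2 t) in
  (* (i) *)
  (forall t, 0 <= t ->
     e12 t = vopp (mv (mT (Qd12 t)) (e21 t)) /\ norm (e12 t) = norm (e21 t)) /\
  (* (ii) *)
  (forall t, 0 < t ->
     derivable_pt_lim Psi12 t (dot (e12 t) (eOm1 t) + dot (e21 t) (eOm2 t))) /\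
  (* (iii) *)
  (forall t, 0 < t ->
     exists de12 de21 : vec3,
       vderiv e12 de12 t /\
       norm de12 <= (ka + kb) * (norm (eOm1 t) + norm (eOm2 t)) + Bd * norm (e12 t) /\
       vderiv e21 de21 t /\
       norm de21 <= (ka + kb) * (norm (eOm1 t) + norm (eOm2 t)) + Bd * norm (e21 t)) /\
  (* (iv) *)
  (forall (psi t : R), 0 <= t -> Psi12 t <= psi -> psi < 2 * Rmin ka kb ->
     psi_lower ka kb * (norm (e12 t)) ^ 2 <= Psi12 t /\
     Psi12 t <= psi_upper ka kb psi * (norm (e12 t)) ^ 2).
Proof.
  intros Psi12 e12 e21 eOm1 eOm2.
  destruct (noncol_facts p1 p2 p3 Hncol) as (H21 & H12 & H31 & H32 & Hn1 & Hn2).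
  set (s12 := sdir p1 p2). set (s21 := sdir p2 p1).
  set (n1 := cross (sdir p1 p2) (sdir p1 p3)). set (n2 := cross (sdir p2 p1) (sdir p2 p3)).
  assert (Hs12 : dot s12 s12 = 1) by (apply sdir_unit; exact H21).
  assert (Hs21 : dot s21 s21 = 1) by (apply sdir_unit; exact H12).
  assert (Hsn1 : dot s12 n1 = 0) by apply dot_cross_self.
  assert (Hsn2 : dot s21 n2 = 0) by apply dot_cross_self.
  assert (Hns12 : norm s12 = 1) by (unfold norm; rewrite Hs12; apply sqrt_1).
  assert (Hns21 : norm s21 = 1) by (unfold norm; rewrite Hs21; apply sqrt_1).
  assert (FB2 : forall s, 0 <= s -> bcross (R1 s) p1 p2 p3 = mv (mT (R1 s)) n1).
  { intros s Hs. unfold bcross, bvec, n1. apply so3_cross, so3_T, HSO1, Hs. }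
  assert (FB3 : forall s, 0 <= s -> bcross (R2 s) p2 p1 p3 = mv (mT (R2 s)) n2).
  { intros s Hs. unfold bcross, bvec, n2. apply so3_cross, so3_T, HSO2, Hs. }
  assert (FA : forall s, 0 <= s -> acoef (R1 s) (R2 s) p1 p2 p3 = norm n1 * norm n2).
  { intros s Hs. unfold acoef. rewrite FB2, FB3 by exact Hs.
    rewrite !norm_so3 by (apply so3_T; auto). reflexivity. }
  assert (FA' : forall s, 0 <= s -> acoef (R2 s) (R1 s) p2 p1 p3 = norm n1 * norm n2).
  { intros s Hs. unfold acoef. rewrite FB2, FB3 by exact Hs.
    rewrite !norm_so3 by (apply so3_T; auto). ring. }
  assert (Ha0 : 0 < norm n1 * norm n2) by (apply Rmult_lt_0_compat; auto).
  assert (Ee12 : forall s, 0 <= s -> e12 s =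
     vadd (vscale ka (Tf R1 R2 (fun s => mT (Qd12 s)) s21 s12 s))
          (vscale kb (vscale (/ (norm n2 * norm n1)) (Tf R1 R2 (fun s => mT (Qd12 s)) n2 n1 s)))).
  { intros s Hs. unfold e12, e_edge, e_alpha, e_beta, Tf. rewrite FA, FB2, FB3 by exact Hs.
    rewrite (Rmult_comm (norm n2)). reflexivity. }
  assert (Ee21 : forall s, 0 <= s -> e21 s =
     vadd (vscale ka (Tf R2 R1 Qd12 s12 s21 s))
          (vscale kb (vscale (/ (norm n1 * norm n2)) (Tf R2 R1 Qd12 n1 n2 s)))).
  { intros s Hs. unfold e21, e_edge, e_alpha, e_beta, Tf. rewrite FA', FB2, FB3 by exact Hs.
    reflexivity. }
  assert (EPsi : forall s, 0 <= s -> Psi12 s =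
     ka * (1 + dot (mv (mT (R2 s)) s21) (mv (Qd12 s) (mv (mT (R1 s)) s12))) +
     kb * (1 + / (norm n1 * norm n2) * dot (mv (mT (R2 s)) n2) (mv (Qd12 s) (mv (mT (R1 s)) n1)))).
  { intros s Hs. unfold Psi12, Psi_edge, Psi_alpha, Psi_beta. rewrite FA, FB2, FB3 by exact Hs.
    reflexivity. }
  split; [|split; [|split]].
  -
    intros t Ht. pose proof (HQso t Ht) as HQ.
    assert (E: e12 t = vopp (mv (mT (Qd12 t)) (e21 t))).
    { unfold e12, e21, e_edge, e_alpha, e_beta.
      assert (acoef (R2 t) (R1 t) p2 p1 p3 = acoef (R1 t) (R2 t) p1 p2 p3) as ->
        by (unfold acoef; ring).
      apply part_i, HQ. }
    split; [exact E|]. rewrite E, norm_opp. apply norm_so3, so3_T, HQ.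
  -
    intros t Ht. assert (Ht0 : 0 <= t) by lra.
    eapply dlim_loc. exact Ht. exact EPsi.
    pose proof (P_deriv R1 R2 Qd12 s21 s12 (Om1 t) (Om2 t) (Omd1 t) (Omd2 t) (Omd12 t) t
                 (Hkin1 t Ht) (Hkin2 t Ht) (HQd t Ht) (HOmd12 t Ht0) (HQso t Ht0)) as Da.
    pose proof (P_deriv R1 R2 Qd12 n2 n1 (Om1 t) (Om2 t) (Omd1 t) (Omd2 t) (Omd12 t) t
                 (Hkin1 t Ht) (Hkin2 t Ht) (HQd t Ht) (HOmd12 t Ht0) (HQso t Ht0)) as Db.
    eapply D_eq.
    { apply D_plus; apply D_scal; apply D_plus; [apply D_const | exact Da | apply D_const | apply D_scal; exact Db]. }
    rewrite (Ee12 t Ht0), (Ee21 t Ht0). unfold Tf, eOm1, eOm2. rewrite (Rmult_comm (norm n2)).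
    generalize (/ (norm n1 * norm n2)).
    generalize (cross (mv (mT (Qd12 t)) (mv (mT (R2 t)) s21)) (mv (mT (R1 t)) s12))
      (cross (mv (Qd12 t) (mv (mT (R1 t)) s12)) (mv (mT (R2 t)) s21))
      (cross (mv (mT (Qd12 t)) (mv (mT (R2 t)) n2)) (mv (mT (R1 t)) n1))
      (cross (mv (Qd12 t) (mv (mT (R1 t)) n1)) (mv (mT (R2 t)) n2)).
    generalize (vsub (Om1 t) (Omd1 t)) (vsub (Om2 t) (Omd2 t)).
    clear. intros. sring.
  -
    intros t Ht. assert (Ht0 : 0 <= t) by lra.
    pose proof (HQso t Ht0) as HQ. pose proof (so3_T _ HQ) as HQT.
    destruct (edge_deriv R1 R2 (fun s => mT (Qd12 s)) (mT (mm (Qd12 t) (hat (Omd12 t))))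
       s21 s12 n2 n1 (Om1 t) (Om2 t) (Omd1 t) (Omd2 t) (Omd12 t) e12 ka kb Bd t Ht
       (Hkin1 t Ht) (Hkin2 t Ht) (mderiv_mT _ _ _ (HQd t Ht))
       (fun z => mvDQ_T (Qd12 t) (Omd12 t) z) (HOmd12 t Ht0) HQT (HSO1 t Ht0) (HSO2 t Ht0)
       Hns21 Hns12 ltac:(rewrite Rmult_comm; exact Ha0) Hka Hkb (HB1 t Ht0) Ee12) as [d1 [D1 B1]].
    assert (HDQ : forall z, mv (mm (Qd12 t) (hat (Omd12 t))) z =
                            vopp (cross (vopp (mv (Qd12 t) (Omd12 t))) (mv (Qd12 t) z))).
    { intros z. rewrite mv_mm, mv_hat, <- (so3_cross _ _ _ HQ).
      generalize (mv (Qd12 t) (Omd12 t)) (mv (Qd12 t) z). clear. vring. }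
    assert (Hw : vopp (mv (Qd12 t) (Omd12 t)) = vsub (Omd2 t) (mv (Qd12 t) (Omd1 t))).
    { rewrite (HOmd12 t Ht0), mv_sub, (so3_MT _ _ HQ).
      generalize (mv (Qd12 t) (Omd1 t)). clear. vring. }
    destruct (edge_deriv R2 R1 Qd12 (mm (Qd12 t) (hat (Omd12 t)))
       s12 s21 n1 n2 (Om2 t) (Om1 t) (Omd2 t) (Omd1 t) (vopp (mv (Qd12 t) (Omd12 t))) e21 ka kb Bd t Ht
       (Hkin2 t Ht) (Hkin1 t Ht) (HQd t Ht) HDQ Hw HQ (HSO2 t Ht0) (HSO1 t Ht0)
       Hns12 Hns21 Ha0 Hka Hkb (HB2 t Ht0) Ee21) as [d2 [D2 B2]].
    exists d1, d2. unfold eOm1, eOm2. split; [exact D1|split; [exact B1|split; [exact D2|lra]]].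
  -
    intros psi t Ht Hle Hlt.
    pose proof (HQso t Ht) as HQ. pose proof (so3_T _ (HSO1 t Ht)) as H1T. pose proof (so3_T _ (HSO2 t Ht)) as H2T.
    assert (SI := static_ineq (Qd12 t) (mv (mT (R2 t)) s21) (mv (mT (R1 t)) s12)
        (mv (mT (R2 t)) n2) (mv (mT (R1 t)) n1) ka kb HQ
        ltac:(rewrite (so3_dot _ _ _ H2T); exact Hs21)
        ltac:(rewrite (so3_dot _ _ _ H1T); exact Hs12)
        ltac:(rewrite (so3_dot _ _ _ H2T); exact Hsn2)
        ltac:(rewrite (so3_dot _ _ _ H1T); exact Hsn1)
        ltac:(rewrite (norm_so3 _ _ H2T); exact Hn2)
        ltac:(rewrite (norm_so3 _ _ H1T); exact Hn1) Hka Hkb).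
    cbv zeta in SI. rewrite (norm_so3 _ _ H1T), (norm_so3 _ _ H2T) in SI.
    rewrite <- (EPsi t Ht) in SI.
    assert (Ee : e12 t = vadd (vscale ka (cross (mv (mT (Qd12 t)) (mv (mT (R2 t)) s21)) (mv (mT (R1 t)) s12)))
        (vscale kb (vscale (/ (norm n1 * norm n2)) (cross (mv (mT (Qd12 t)) (mv (mT (R2 t)) n2)) (mv (mT (R1 t)) n1))))).
    { rewrite (Ee12 t Ht). unfold Tf. rewrite (Rmult_comm (norm n2)). reflexivity. }
    rewrite <- Ee in SI. rewrite norm_sq.
    destruct SI as (P0 & Pup & Plow).
    set (P := Psi12 t) in *. set (E := dot (e12 t) (e12 t)) in *.
    pose proof (dot_ge0 (e12 t)) as E0. fold E in E0.
    unfold psi_lower, psi_upper.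
    assert (Hm : 0 < Rmin ka kb) by (apply Rmin_pos; lra).
    assert (HmM : Rmin ka kb * Rmax ka kb = ka * kb).
    { destruct (Rle_dec ka kb). rewrite Rmin_left, Rmax_right by lra. ring.
      rewrite Rmin_right, Rmax_left by lra. ring. }
    assert (Hm2 : Rmin (ka ^ 2) (kb ^ 2) = Rmin ka kb ^ 2).
    { destruct (Rle_dec ka kb). rewrite !Rmin_left by nra; auto. rewrite !Rmin_right by nra; auto. }
    assert (Hmk : Rmin ka kb <= ka + kb) by (pose proof (Rmin_l ka kb); lra).
    set (m := Rmin ka kb) in *. set (M := Rmax ka kb) in *.
    set (D := 2 * Rmax (ka ^ 2) (Rmax (kb ^ 2) ((ka - kb) ^ 2)) + 2 * (ka + kb) ^ 2).
    assert (HD : 4 * (m * M) <= D).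
    { unfold D. pose proof (Rmax_l (ka^2) (Rmax (kb ^ 2) ((ka - kb) ^ 2))).
      pose proof (pow2_ge_0 ka). pose proof (pow2_ge_0 (ka - kb)). rewrite HmM. nra. }
    assert (HMp : 0 < M) by (unfold M; pose proof (Rmax_l ka kb); lra).
    assert (HDp : 0 < D) by nra.
    split.
    + apply (Rmult_le_reg_r D); auto.
      replace (m / D * E * D) with (m * E) by (field; lra).
      assert (m * E <= m * (4 * M * P)) by (apply Rmult_le_compat_l; lra).
      nra.
    + rewrite Hm2.
      assert (Hd : 0 < 2 * m - psi) by lra.
      assert (HPE : P * (2 * m - psi) <= E).
      { eapply Rle_trans; [|exact Plow]. apply Rmult_le_compat_l; lra. }
      apply (Rmult_le_reg_r (m ^ 2 * (2 * m - psi))). { apply Rmult_lt_0_compat; [apply pow_lt; lra | lra]. }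
      replace (m * (ka + kb) / (m ^ 2 * (2 * m - psi)) * E * (m ^ 2 * (2 * m - psi)))
        with (m * (ka + kb) * E) by (field; split; nra).
      assert (m * (ka + kb) * (P * (2 * m - psi)) <= m * (ka + kb) * E)
        by (apply Rmult_le_compat_l; nra).
      assert (P * (m ^ 2 * (2 * m - psi)) <= m * (ka + kb) * (P * (2 * m - psi))).
      { assert (0 <= P * (2 * m - psi)) by nra.
        replace (P * (m ^ 2 * (2 * m - psi))) with (m * m * (P * (2 * m - psi))) by ring.
        apply Rmult_le_compat_r; [lra|]. apply Rmult_le_compat_l; lra. }
      lra.
Qed.
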